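(* Every triangle-free unit disk graph has a proper vertex coloring with at most $4$ colors.
   Context: A graph $G$ is a unit disk graph if its vertices can be put in one-to-one correspondence with closed disks of radius $1$ in the plane so that two vertices are adjacent if and only if the corresponding disks intersect (tangent disks are considered to intersect). A graph is triangle-free if it has no subgraph isomorphic to $K_3$. *)

(* Defs.v *)
From mathcomp Require Import all_boot all_order all_algebra.
From mathcomp Require Import reals.
Set Implicit Arguments. Unset Strict Implicit. Unset Printing Implicit Defensive.
Import Order.TTheory GRing.Theory Num.Theory.
Local Open Scope ring_scope.

Definition simple_graph (T : finType) (e : rel T) : Prop :=
  symmetric e /\ irreflexive e.

(* Closed disks of radius 1 centred at p and q intersect (tangency counts)
   iff the Euclidean distance of the centres is at most 2, i.e. the squared
   distance is at most 4. *)
Definition unit_disks_meet (R : realType) (p q : R * R) : bool :=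
  (p.1 - q.1) ^+ 2 + (p.2 - q.2) ^+ 2 <= 4%:R.

(* e is a unit disk graph: vertices are in one-to-one correspondence with
   unit disks (given by injective centres), and two distinct vertices are
   adjacent iff their disks intersect. *)
Definition unit_disk_graph (R : realType) (T : finType) (e : rel T) : Prop :=
  exists c : T -> R * R, injective c /\
    forall x y : T, x != y -> (e x y = unit_disks_meet (c x) (c y)).

Definition triangle_free (T : finType) (e : rel T) : Prop :=
  forall x y z : T, ~ [/\ e x y, e y z & e x z].

Definition k_colorable (T : finType) (e : rel T) (k : nat) : Prop :=
  exists col : T -> 'I_k, forall x y : T, e x y -> col x != col y.

(* Main.v *)
Require Import Defs.
From mathcomp Require Import all_boot all_order all_algebra.
From mathcomp Require Import reals.
From mathcomp Require Import lra ring.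
Import Order.TTheory GRing.Theory Num.Theory.

Section Geo.
Local Open Scope ring_scope.
Variable R : realType.

Lemma sqr_le_abs (a b : R) : 0 <= b -> a ^+ 2 <= b ^+ 2 -> - b <= a /\ a <= b.
Proof.
move=> hb h; have : `|a| <= b.
  by rewrite -(ger0_norm hb) -ler_sqr ?nnegrE ?normr_ge0 // !real_normK ?num_real.
by rewrite ler_norml => /andP[].
Qed.

Lemma sectorB (X Y P Q : R) : 0 <= X -> 0 <= P -> 3 * Y ^+ 2 <= X ^+ 2 ->
  3 * Q ^+ 2 <= P ^+ 2 -> 0 <= X * P + Y * Q /\
   (X * Q - Y * P) ^+ 2 <= 3 * (X * P + Y * Q) ^+ 2.
Proof.
move=> hX hP hu hv.
have hXP : 0 <= X * P by apply: mulr_ge0.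
have hYQ : (3 * (Y * Q)) ^+ 2 <= (X * P) ^+ 2.
  have -> : (3 * (Y * Q)) ^+ 2 = (3 * Y ^+ 2) * (3 * Q ^+ 2) by ring.
  rewrite exprMn; apply: ler_pM => //; apply: mulr_ge0 => //; apply: sqr_ge0.
have [h1 h2] := sqr_le_abs _ _ hXP hYQ.
have hXQ : (3 * (X * Q)) ^+ 2 <= 3 * (X * P) ^+ 2.
  have -> : (3 * (X * Q)) ^+ 2 = X ^+ 2 * (3 * (3 * Q ^+ 2)) by ring.
  have -> : 3 * (X * P) ^+ 2 = X ^+ 2 * (3 * P ^+ 2) by ring.
  apply: ler_wpM2l; [apply: sqr_ge0 | lra].
have hYP : (3 * (Y * P)) ^+ 2 <= 3 * (X * P) ^+ 2.
  have -> : (3 * (Y * P)) ^+ 2 = P ^+ 2 * (3 * (3 * Y ^+ 2)) by ring.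
  have -> : 3 * (X * P) ^+ 2 = P ^+ 2 * (3 * X ^+ 2) by ring.
  apply: ler_wpM2l; [apply: sqr_ge0 | lra].
split; first lra.
(* crs^2 <= 2 (XQ)^2 + 2 (YP)^2 <= (4/3) (XP)^2 ;  3 dot^2 >= 3 (2/3 XP)^2 *)
have c1 : (X * Q - Y * P) ^+ 2 <= 2 * (X * Q) ^+ 2 + 2 * (Y * P) ^+ 2.
  have -> : 2 * (X * Q) ^+ 2 + 2 * (Y * P) ^+ 2 = (X * Q - Y * P) ^+ 2 + (X * Q + Y * P) ^+ 2 by ring.
  by rewrite lerDl sqr_ge0.
have d1 : 0 <= 3 * (X * P + Y * Q) - 2 * (X * P) by lra.
have d2 : (2 * (X * P)) ^+ 2 <= (3 * (X * P + Y * Q)) ^+ 2.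
  rewrite -subr_ge0.
  have -> : (3 * (X * P + Y * Q)) ^+ 2 - (2 * (X * P)) ^+ 2 = (3 * (X * P + Y * Q) - 2 * (X * P)) * (3 * (X * P + Y * Q) + 2 * (X * P)) by ring.
  apply: mulr_ge0 => //; lra.
lra.
Qed.

Lemma sectorC (X Y P Q : R) : 0 <= X -> 0 <= P -> 0 <= Y -> 0 <= Q ->
  X ^+ 2 <= 3 * Y ^+ 2 -> P ^+ 2 <= 3 * Q ^+ 2 -> 0 <= X * P + Y * Q /\
   (X * Q - Y * P) ^+ 2 <= 3 * (X * P + Y * Q) ^+ 2.
Proof.
move=> hX hP hY hQ hu hv.
set r := Num.sqrt (3 : R).
have r0 : 0 <= r by apply: sqrtr_ge0.
have r2 : r ^+ 2 = 3 by rewrite sqr_sqrtr.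
have key : forall A B : R, 0 <= A -> 0 <= B -> A ^+ 2 <= 3 * B ^+ 2 ->
   0 <= (A + r * B) / 2 /\ 3 * ((B - r * A) / 2) ^+ 2 <= ((A + r * B) / 2) ^+ 2.
  move=> A B hA hB h; split.
    apply: divr_ge0 => //; apply: addr_ge0 => //; exact: mulr_ge0.
  have hrB : A <= r * B.
    have h' : A ^+ 2 <= (r * B) ^+ 2 by rewrite exprMn r2.
    by have [] := sqr_le_abs _ _ (mulr_ge0 r0 hB) h'.
  rewrite -subr_ge0.
  have -> : ((A + r * B) / 2) ^+ 2 - 3 * ((B - r * A) / 2) ^+ 2 = 2 * A * (r * B - A)
     + (r ^+ 2 - 3) * (B ^+ 2 - 3 * A ^+ 2) / 4 by field.
  rewrite r2 subrr mul0r mul0r addr0; apply: mulr_ge0; [lra | lra].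
have [h1 h2] := key X Y hX hY hu.
have [h3 h4] := key P Q hP hQ hv.
have := sectorB _ _ _ _ h1 h3 h2 h4.
have -> : (X + r * Y) / 2 * ((P + r * Q) / 2) + (Y - r * X) / 2 * ((Q - r * P) / 2) = X * P + Y * Q + (r ^+ 2 - 3) * (X * P + Y * Q) / 4 by field.
have -> : (X + r * Y) / 2 * ((Q - r * P) / 2) - (Y - r * X) / 2 * ((P + r * Q) / 2) = X * Q - Y * P + (r ^+ 2 - 3) * (X * Q - Y * P) / 4 by field.
by rewrite r2 subrr !mul0r !addr0.
Qed.

Lemma close_of_cos (A B p : R) : 0 <= A -> A <= 4 -> 0 <= B -> B <= 4 ->
  0 <= p -> A * B <= 4 * p ^+ 2 -> A + B - 2 * p <= 4.
Proof.
move=> A0 A4 B0 B4 p0 H.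
case: (lerP (A + B - 2 * p) 4) => // Hc; exfalso.
have h1 : 0 <= 2 * p by lra.
have h2 : (2 * p) ^+ 2 < (A + B - 4) ^+ 2.
  rewrite -subr_gt0.
  have -> : (A + B - 4) ^+ 2 - (2 * p) ^+ 2 = (A + B - 4 - 2 * p) * (A + B - 4 + 2 * p) by ring.
  apply: mulr_gt0; lra.
have h3 : (A + B - 4) ^+ 2 <= A * B.
  have -> : (A + B - 4) ^+ 2 = A * B + ((4 - A) ^+ 2 + (4 - A) * (4 - B) + (4 - B) ^+ 2 - 4 * ((4 - A) + (4 - B))) by ring.
  rewrite gerDl.
  have : ((4 - A) ^+ 2 + (4 - A) * (4 - B) + (4 - B) ^+ 2 - 4 * ((4 - A) + (4 - B))) <= ((4 - A) + (4 - B)) * ((4 - A) + (4 - B) - 4).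
    have -> : ((4 - A) + (4 - B)) * ((4 - A) + (4 - B) - 4) = (4 - A) ^+ 2 + (4 - A) * (4 - B) + (4 - B) ^+ 2 - 4 * ((4 - A) + (4 - B)) + (4 - A) * (4 - B) by ring.
    rewrite lerDl; apply: mulr_ge0; lra.
  move=> h; apply: (le_trans h); apply: mulr_ge0_le0; lra.
lra.
Qed.

Definition sec (X Y : R) : 'I_3 :=
  if 3 * Y ^+ 2 <= X ^+ 2 then @Ordinal 3 0 isT
  else if 0 <= Y then @Ordinal 3 1 isT else @Ordinal 3 2 isT.

Lemma sectorA (X Y P Q : R) : 0 <= X -> 0 <= P -> Y <= 0 -> Q <= 0 ->
  X ^+ 2 <= 3 * Y ^+ 2 -> P ^+ 2 <= 3 * Q ^+ 2 -> 0 <= X * P + Y * Q /\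
   (X * Q - Y * P) ^+ 2 <= 3 * (X * P + Y * Q) ^+ 2.
Proof.
move=> hX hP hY hQ hu hv.
have := @sectorC X (- Y) P (- Q) hX hP.
have -> : X * P + - Y * - Q = X * P + Y * Q by ring.
have -> : (X * - Q - - Y * P) ^+ 2 = (X * Q - Y * P) ^+ 2 by ring.
have -> : (- Y) ^+ 2 = Y ^+ 2 by ring.
have -> : (- Q) ^+ 2 = Q ^+ 2 by ring.
apply; lra.
Qed.

Lemma same_sec (X Y P Q : R) : 0 <= X -> 0 <= P -> sec X Y = sec P Q ->
  0 <= X * P + Y * Q /\ (X * Q - Y * P) ^+ 2 <= 3 * (X * P + Y * Q) ^+ 2.
Proof.
move=> hX hP; rewrite /sec.
case: (lerP (3 * Y ^+ 2) (X ^+ 2)) => h1; case: (lerP (3 * Q ^+ 2) (P ^+ 2)) => h2;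
  case: (lerP 0 Y) => h3; case: (lerP 0 Q) => h4 => //.
all: move=> _; first [ by apply: sectorB
  | exact: (sectorC _ _ _ _ hX hP h3 h4 (ltW h1) (ltW h2))
  | exact: (sectorA _ _ _ _ hX hP (ltW h3) (ltW h4) (ltW h1) (ltW h2)) ].
Qed.

Lemma geo (o p q : R * R) : unit_disks_meet o p -> unit_disks_meet o q ->
  o.1 <= p.1 -> o.1 <= q.1 ->
  sec (p.1 - o.1) (p.2 - o.2) = sec (q.1 - o.1) (q.2 - o.2) ->
  unit_disks_meet p q.
Proof.
rewrite /unit_disks_meet => hp hq h1 h2 hs.
have [d c] := same_sec (p.1 - o.1) (p.2 - o.2) (q.1 - o.1) (q.2 - o.2) ltac:(lra) ltac:(lra) hs.
move: hp hq d c h1 h2 hs.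
case: o => a b; case: p => x y; case: q => z w /= hp hq d c _ _ _.
have hA : (x - a) ^+ 2 + (y - b) ^+ 2 <= 4.
  by move: hp; have -> : (a - x) ^+ 2 + (b - y) ^+ 2 = (x - a) ^+ 2 + (y - b) ^+ 2 by ring.
have hB : (z - a) ^+ 2 + (w - b) ^+ 2 <= 4.
  by move: hq; have -> : (a - z) ^+ 2 + (b - w) ^+ 2 = (z - a) ^+ 2 + (w - b) ^+ 2 by ring.
move: hA hB d c; set X := x - a; set Y := y - b; set P := z - a; set Q := w - b => hA hB d c.
have -> : x - z = X - P by rewrite /X /P; ring.
have -> : y - w = Y - Q by rewrite /Y /Q; ring.
have -> : (X - P) ^+ 2 + (Y - Q) ^+ 2 = (X ^+ 2 + Y ^+ 2) + (P ^+ 2 + Q ^+ 2) - 2 * (X * P + Y * Q) by ring.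
apply: close_of_cos => //.
- by apply: addr_ge0; apply: sqr_ge0.
- by apply: addr_ge0; apply: sqr_ge0.
- have -> : (X ^+ 2 + Y ^+ 2) * (P ^+ 2 + Q ^+ 2) = (X * P + Y * Q) ^+ 2 + (X * Q - Y * P) ^+ 2 by ring.
  lra.
Qed.

End Geo.

Lemma seq_min (R : realType) (T : eqType) (f : T -> R) (s : seq T) x0 : x0 \in s ->
  exists2 v, v \in s & forall w, w \in s -> (f v <= f w)%R.
Proof.
elim: s x0 => // a s IH x0 _.
case: s IH => [|b s] IH.
  exists a; first exact: mem_head.
  by move=> w; rewrite inE => /eqP ->.
have [v vin hv] := IH b (mem_head _ _).
case: (lerP (f a) (f v)) => h.
  exists a; first exact: mem_head.
  move=> w; rewrite inE => /orP[/eqP -> // | wi].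
  exact: le_trans h (hv w wi).
exists v; first by rewrite inE vin orbT.
move=> w; rewrite inE => /orP[/eqP -> | wi]; [exact: ltW | exact: hv].
Qed.

Lemma col_sets (R : realType) (T : finType) (e : rel T) (c : T -> R * R) :
  symmetric e -> irreflexive e ->
  (forall x y : T, x != y -> e x y = unit_disks_meet (c x) (c y)) ->
  triangle_free e ->
  forall n (S : {set T}), #|S| <= n -> exists col : T -> 'I_4,
    forall x y, x \in S -> y \in S -> e x y -> col x != col y.
Proof.
move=> sym irr hud tri; elim=> [|n IH] S hS.
  exists (fun _ => ord0) => x y xS.
  have : 0 < #|S| by apply/card_gt0P; exists x.
  by rewrite ltnNge hS.
case: (set_0Vmem S) => [-> | [v0 v0S]].
  by exists (fun _ => ord0) => x y; rewrite inE.
have [v vS hv] := @seq_min R T (fun x => (c x).1) (enum S) v0 ltac:(by rewrite mem_enum).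
rewrite mem_enum in vS.
set S' := S :\ v.
have hS' : #|S'| <= n by move: hS; rewrite (cardsD1 v S) vS.
have [col' hcol'] := IH S' hS'.
set N := [set w in S' | e v w].
have hN : #|N| <= 3.
  have := @leq_card_in _ _ (fun w => @sec R ((c w).1 - (c v).1)%R ((c w).2 - (c v).2)%R) N.
  rewrite card_ord; apply.
  move=> w1 w2; rewrite !inE => /andP[/andP[w1v w1S] ev1] /andP[/andP[w2v w2S] ev2] hs.
  case: (eqVneq w1 w2) => // hne; exfalso; apply: (tri v w1 w2); split => //.
  rewrite hud //; apply: (@geo R (c v)) => //.
  - by rewrite -hud // eq_sym.
  - by rewrite -hud // eq_sym.
  - by apply: hv; rewrite mem_enum.
  - by apply: hv; rewrite mem_enum.
set U := col' @: N.
have hU : #|U| < 4 by apply: (leq_ltn_trans (leq_imset_card _ _)); apply: (leq_ltn_trans hN).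
have : 0 < #|~: U| by rewrite cardsCs setCK card_ord subn_gt0.
case/card_gt0P => k; rewrite inE => hk.
exists (fun x => if x == v then k else col' x) => x y xS yS exy.
have hSx : forall z, z \in S -> z != v -> z \in S' by move=> z zS zv; rewrite !inE zv zS.
case: (eqVneq x v) => [xv | xv]; case: (eqVneq y v) => [yv | yv].
- by move: exy; rewrite xv yv irr.
- subst x. apply: contra hk => /eqP ->; apply: imset_f; rewrite inE hSx ?exy //.
- subst y. rewrite eq_sym. apply: contra hk => /eqP ->; apply: imset_f.
  rewrite inE hSx //. by rewrite sym.
- by apply: hcol' => //; apply: hSx.
Qed.

Theorem lemma4p1 (R : realType) (T : finType) (e : rel T) :
  simple_graph e -> unit_disk_graph R e -> triangle_free e ->
  k_colorable e 4.
Proof.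
move=> [sym irr] [c [_ hud]] tri.
have [col hcol] := @col_sets R T e c sym irr hud tri #|[set: T]| [set: T] (leqnn _).
by exists col => x y; apply: hcol; rewrite inE.
Qed.
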